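(* Let $\lambda$ be an infinite cardinal and let $\mu$ be a cardinal with $3\leq\mu\leq\lambda^+$. Then $\lambda^+\not\to_{hc}(\mu)^2_\lambda$: there is a coloring $c:[\lambda^+]^2\to\lambda$ such that for no $\xi<\lambda$ and no $X\subseteq\lambda^+$ with $|X|=\mu$ is the graph $(X,c^{-1}(\xi)\cap[X]^2)$ highly connected.
   Context: $[S]^2$ denotes the set of $2$-element subsets of $S$. A graph $G=(V,E)$ is highly connected if for every $D\subseteq V$ with $|D|<|V|$ the graph induced on $V\setminus D$ is connected. For cardinals $\nu,\mu,\lambda$, $\nu\to_{hc}(\mu)^2_\lambda$ means: for every $c:[\nu]^2\to\lambda$ there exist $\xi<\lambda$ and $X\subseteq\nu$ with $|X|=\mu$ such that $(X,c^{-1}(\xi)\cap[X]^2)$ is highly connected; $\not\to_{hc}$ is its negation. *)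

(* Defs.v *)
(* cardinals are represented by types, compared via injections. *)
From Stdlib Require Import Relations Relation_Operators Classical.

Definition card_le (A B : Type) : Prop :=
  exists f : A -> B, forall x y, f x = f y -> x = y.

Definition card_eq (A B : Type) : Prop :=
  exists f : A -> B, (forall x y, f x = f y -> x = y) /\ (forall y, exists x, f x = y).

Definition card_lt (A B : Type) : Prop := card_le A B /\ ~ card_le B A.

Definition infinite_type (A : Type) : Prop := card_le nat A.

Definition is_succ_card (L K : Type) : Prop :=
  card_lt L K /\ forall T : Type, card_lt T K -> card_le T L.

Definition subT {K : Type} (S : K -> Prop) : Type := { x : K | S x }.

Definition col_edge {K L : Type} (c : K -> K -> L) (xi : L) (V : K -> Prop)
  (x y : K) : Prop := V x /\ V y /\ x <> y /\ c x y = xi.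

Definition col_connected {K L : Type} (c : K -> K -> L) (xi : L) (V : K -> Prop) : Prop :=
  forall x y, V x -> V y -> clos_refl_trans K (col_edge c xi V) x y.

Definition highly_connected {K L : Type} (c : K -> K -> L) (xi : L) (V : K -> Prop) : Prop :=
  forall D : K -> Prop, (forall x, D x -> V x) ->
    card_lt (subT D) (subT V) ->
    col_connected c xi (fun x => V x /\ ~ D x).

(* Main.v *)
Require Import Defs.
From Stdlib Require Import Relations Relation_Operators Classical ProofIrrelevance.


Lemma rt_first (K : Type) (R : K -> K -> Prop) x y :
  clos_refl_trans K R x y -> x <> y -> exists z, R x z.
Proof.
intros H n. apply clos_rt_rt1n in H. destruct H as [|y0 z0 H1 H2]; [congruence | eauto].
Qed.

Lemma third (K : Type) (a b d u v : K) : a <> b -> a <> d -> b <> d ->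
  exists t, (t = a \/ t = b \/ t = d) /\ t <> u /\ t <> v.
Proof.
intros ab ad bd.
destruct (Classical_Prop.classic (a <> u /\ a <> v)) as [Ha|Ha]; [exists a; tauto|].
destruct (Classical_Prop.classic (b <> u /\ b <> v)) as [Hb|Hb]; [exists b; tauto|].
exists d; split; [tauto|].
assert (a = u \/ a = v) by (apply NNPP; tauto).
assert (b = u \/ b = v) by (apply NNPP; tauto).
split; intro; subst; intuition congruence.
Qed.

Lemma card_lt_empty (K : Type) (X : K -> Prop) a : X a ->
  card_lt (subT (fun _ : K => False)) (subT X).
Proof.
intros Xa; split.
- exists (fun s : subT (fun _ : K => False) => False_rect (subT X) (proj2_sig s)). intros [x []].
- intros [f _]. destruct (f (exist _ a Xa)) as [x []].
Qed.

Lemma card_lt_single (K : Type) (X : K -> Prop) a b v : X a -> X b -> a <> b -> X v ->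
  card_lt (subT (fun x : K => x = v)) (subT X).
Proof.
intros Xa Xb ab Xv; split.
- exists (fun s => exist X v Xv). intros [x hx] [y hy] _. subst. reflexivity.
- intros [f hf].
  assert (E : exist X a Xa = exist X b Xb).
  { apply hf. destruct (f (exist X a Xa)) as [x hx]; destruct (f (exist X b Xb)) as [y hy].
    subst. reflexivity. }
  apply ab. exact (f_equal (@proj1_sig _ _) E).
Qed.

Lemma graph_part (K L : Type) (lt : K -> K -> Prop) (c : K -> K -> L)
 (irr : forall x, ~ lt x x) (tr : forall x y z, lt x y -> lt y z -> lt x z)
 (tot : forall x y, x <> y -> lt x y \/ lt y x)
 (csym : forall x y, c x y = c y x)
 (cuniq : forall y1 y2 z, lt y1 z -> lt y2 z -> c y1 z = c y2 z -> y1 = y2)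
 (xi : L) (X : K -> Prop) (a b d : K) (Xa : X a) (Xb : X b) (Xd : X d)
 (ab : a <> b) (ad : a <> d) (bd : b <> d) : ~ highly_connected c xi X.
Proof.
intros H.
set (Par := fun z y => X z /\ X y /\ lt y z /\ c y z = xi).
assert (puniq : forall z y1 y2, Par z y1 -> Par z y2 -> y1 = y2).
{ intros z y1 y2 (_&_&l1&c1) (_&_&l2&c2). apply (cuniq y1 y2 z); congruence. }
assert (plt : forall z y, Par z y -> lt y z) by (intros z y (_&_&l&_); exact l).
assert (pX : forall z y, Par z y -> X z /\ X y) by (intros z y (h1&h2&_); tauto).
assert (edge_par : forall V x y, (forall x, V x -> X x) -> col_edge c xi V x y ->
   Par y x \/ Par x y).
{ intros V x y VX (Vx&Vy&nxy&cxy). destruct (tot x y nxy) as [l|l].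
  - left. repeat split; auto.
  - right. repeat split; auto. rewrite csym; exact cxy. }
set (sub := fun u z => clos_refl_trans K (fun y z => Par z y) u z).
assert (sub_ge : forall u z, sub u z -> z = u \/ lt u z).
{ intros u z h. induction h as [x y p|x|x y z _ IH1 _ IH2].
  - right. exact (plt _ _ p).
  - left; reflexivity.
  - destruct IH1 as [->|l1]; destruct IH2 as [->|l2]; auto. right; eauto. }
assert (sub_inv : forall u z, sub u z -> z = u \/ exists z0, sub u z0 /\ Par z z0).
{ intros u z h. apply clos_rt_rtn1 in h. destruct h as [|y0 z0 p h].
  - left; reflexivity.
  - right. exists y0. split; [apply clos_rtn1_rt; exact h| exact p]. }
assert (Sep : forall u v w, Par u v -> (Par w v \/ Par v w) -> w <> u ->
   ~ clos_refl_trans K (col_edge c xi (fun x => X x /\ ~ x = v)) u w).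
{ intros u v w Puv Hw wu Hp.
  assert (inv : forall p q, clos_refl_trans K (col_edge c xi (fun x => X x /\ ~ x = v)) p q ->
     sub u p -> sub u q).
  { intros p q h. induction h as [p q e|p|p q r _ IH1 _ IH2]; auto.
    intros sp. destruct (edge_par _ p q (fun x hx => proj1 hx) e) as [P|P].
    - eapply rt_trans; [exact sp| apply rt_step; exact P].
    - destruct e as (_&(_&qv)&_).
      destruct (sub_inv _ _ sp) as [->|(z0&s0&P0)].
      + exfalso. apply qv. exact (puniq _ _ _ P Puv).
      + rewrite (puniq _ _ _ P P0). exact s0. }
  assert (sw : sub u w) by (apply (inv u w Hp); apply rt_refl).
  pose proof (plt _ _ Puv) as lvu.
  destruct Hw as [Pw|Pw].
  - destruct (sub_inv _ _ sw) as [->|(z0&s0&P0)]; [congruence|].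
    rewrite (puniq _ _ _ P0 Pw) in s0.
    destruct (sub_ge _ _ s0) as [->|l]; [exact (irr _ lvu)| exact (irr _ (tr _ _ _ l lvu))].
  - pose proof (plt _ _ Pw) as lwv.
    destruct (sub_ge _ _ sw) as [->|l]; [congruence|].
    exact (irr _ (tr _ _ _ l (tr _ _ _ lwv lvu))). }
assert (C0 := H (fun _ => False) (fun _ f => False_ind _ f) (card_lt_empty K X a Xa)).
assert (C0' : forall x y, X x -> X y ->
   clos_refl_trans K (col_edge c xi (fun x => X x /\ ~ False)) x y).
{ intros x y hx hy. apply C0; split; auto. }
assert (C1 : forall v, X v -> col_connected c xi (fun x => X x /\ ~ x = v)).
{ intros v Xv. apply (H (fun x => x = v)).
  - intros x e; subst; exact Xv.
  - exact (card_lt_single K X a b v Xa Xb ab Xv). }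
destruct (rt_first _ _ _ _ (C0' a b Xa Xb) ab) as [z e].
assert (Huv : exists u v, Par u v).
{ destruct (edge_par _ _ _ (fun x hx => proj1 hx) e) as [P|P]; eauto. }
destruct Huv as [u [v Puv]].
pose proof (plt _ _ Puv) as lvu.
assert (uv : u <> v) by (intros ->; exact (irr _ lvu)).
destruct (pX _ _ Puv) as [Xu Xv].
assert (neq : forall z y, Par z y -> z <> y) by (intros z0 y0 P ->; exact (irr _ (plt _ _ P))).
destruct (Classical_Prop.classic (exists w, w <> u /\ (Par w v \/ Par v w))) as [[w [wu Hw]]|H1].
{ assert (Xw : X w /\ w <> v).
  { destruct Hw as [P|P]; split; [exact (proj1 (pX _ _ P))| exact (neq _ _ P)
     | exact (proj2 (pX _ _ P)) | intro; apply (neq _ _ P); auto]. }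
  apply (Sep u v w Puv Hw wu). apply (C1 v Xv); split; tauto. }
destruct (Classical_Prop.classic (exists w, w <> v /\ (Par w u \/ Par u w))) as [[w [wv Hw]]|H2].
{ destruct Hw as [P|P].
  - apply (Sep w u v P (or_intror Puv) (fun e => wv (eq_sym e))).
    apply (C1 u Xu); split; [exact (proj1 (pX _ _ P)) | exact (neq _ _ P) | exact Xv | auto].
  - exact (wv (puniq _ _ _ P Puv)). }
destruct (third K a b d u v ab ad bd) as [t [Ht [tu tv]]].
assert (Xt : X t) by (destruct Ht as [ -> | [ -> | -> ] ]; auto).
assert (inv : forall p q, clos_refl_trans K (col_edge c xi (fun x => X x /\ ~ False)) p q ->
   (p = u \/ p = v) -> (q = u \/ q = v)).
{ intros p q h. induction h as [p q e0|p|p q r _ IH1 _ IH2]; auto.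
  intros Hp. destruct (edge_par _ p q (fun x hx => proj1 hx) e0) as [P|P];
  destruct Hp as [ -> | -> ].
  - right. apply NNPP; intro n. apply H2. exists q; auto.
  - left. apply NNPP; intro n. apply H1. exists q; auto.
  - right. apply NNPP; intro n. apply H2. exists q; auto.
  - left. apply NNPP; intro n. apply H1. exists q; auto. }
destruct (inv u t (C0' u t Xu Xt) (or_introl eq_refl)); auto.
Qed.
From Stdlib Require Import ClassicalEpsilon.
From mathcomp Require Import ssreflect ssrfun ssrbool eqtype ssrnat seq.
From mathcomp Require Import boolp wochoice.

Lemma wo_facts (K : Type) : exists R : K -> K -> bool,
  (forall x y, R x y || R y x) /\ (forall x y, R x y -> R y x -> x = y) /\
  (forall x y z, R x y -> R y z -> R x z) /\
  (forall A : K -> Prop, (exists x, A x) -> exists m, A m /\ forall x, A x -> R m x).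
Proof.
have [R wo] := well_ordering_principle {classic K}.
have tot : forall x y, R x y || R y x.
  move=> x y. have wc : wo_chain R predT by exact: (withinW (A:=predT) wo).
  exact: (wo_chainW wc (x:=x) (y:=y) isT isT).
have anti : forall x y, R x y -> R y x -> x = y.
  move=> x y h1 h2. have wc : wo_chain R predT by exact: (withinW (A:=predT) wo).
  by apply: (wo_chain_antisymmetric wc (x:=x) (y:=y) isT isT); rewrite h1 h2.
have mn : forall A : K -> Prop, (exists x, A x) -> exists m, A m /\ forall x, A x -> R m x.
  move=> A [x Ax].
  have := wo [pred z | `[< A z >] ].
  case. by exists x; rewrite inE; apply/asboolP.
  move=> m [[Am lb] _]; exists m; split; first by move: Am; rewrite inE => /asboolP.
  by move=> y Ay; apply: lb; rewrite inE; apply/asboolP.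
exists R; split=> //; split=> //; split=> //.
move=> x y z Rxy Ryz.
have [m [Am lbm]] := mn (fun w => w = x \/ w = y \/ w = z) (ex_intro _ x (or_introl erefl)).
case: Am => [Em|[Em|Em]]; subst m.
- by apply: lbm; right; right.
- have E : x = y by apply: anti => //; apply: lbm; left.
  by rewrite E.
- have E : y = z by apply: anti => //; apply: lbm; right; left.
  by rewrite -E.
Qed.
Lemma card_le_trans (A B C : Type) : card_le A B -> card_le B C -> card_le A C.
Proof.
move=> [f hf] [g hg]; exists (fun a => g (f a)) => x y /hg /hf //.
Qed.

Lemma good_order (L K : Type) (hK : is_succ_card L K) : exists lt : K -> K -> Prop,
 (forall x, ~ lt x x) /\ (forall x y z, lt x y -> lt y z -> lt x z) /\
 (forall x y, x <> y -> lt x y \/ lt y x) /\ (forall y, card_le {x | lt x y} L).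
Proof.
have [R [tot [anti [trans mn]]]] := wo_facts K.
pose seg z := {y : K | R y z /\ y <> z}.
have [g [ginj gg]] : exists g : K -> K, (forall x y, g x = g y -> x = y) /\
    forall x, card_lt (seg (g x)) K.
  case: (Classical_Prop.classic (exists z, ~ card_lt (seg z) K)) => [ex|nex].
  - have [m [bm lbm]] := mn _ ex.
    have : card_le K (seg m).
      apply: NNPP => nle; apply: bm; split => //.
      by exists (@proj1_sig _ _) => x y; apply: eq_sig_hprop => p; apply: proof_irrelevance.
    move=> [g0 g0inj].
    exists (fun x => proj1_sig (g0 x)); split.
      by move=> x y E; apply: g0inj; apply: eq_sig_hprop E => p; apply: proof_irrelevance.
    move=> x; apply: NNPP => bad.
    have [R1 ne] := proj2_sig (g0 x).
    by apply: ne; apply: anti => //; apply: lbm.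
  - exists id; split => // x; apply: NNPP => bad; apply: nex; by exists x.
exists (fun x y => R (g x) (g y) /\ g x <> g y); split; first by move=> x [].
split.
  move=> x y z [h1 n1] [h2 n2]; split; first exact: trans h2.
  move=> E; apply: n1; apply: anti => //; by rewrite E.
split.
  move=> x y nxy; have n : g x <> g y by move=> /ginj.
  by case/orP: (tot (g x) (g y)) => h; [left|right]; split => // E; apply: n.
move=> y; apply: (@card_le_trans _ (seg (g y))); last first.
  by apply: (proj2 hK); apply: gg.
exists (fun s : {x | R (g x) (g y) /\ g x <> g y} => (exist _ (g (proj1_sig s)) (proj2_sig s) : seg (g y))).
move=> [a ha] [b hb] /= E; have := f_equal (@proj1_sig _ _) E => /= /ginj ab.
by subst b; rewrite (proof_irrelevance _ ha hb).
Qed.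

Theorem mainTheorem3 (L K M : Type)
  (hL : infinite_type L) (hK : is_succ_card L K)
  (hM3 : exists a b d : M, a <> b /\ a <> d /\ b <> d)
  (hMK : card_le M K) :
  exists c : K -> K -> L, (forall x y, c x y = c y x) /\
    forall (xi : L) (X : K -> Prop),
      card_eq (subT X) M -> ~ highly_connected c xi X.
Proof.
destruct (good_order L K hK) as [lt [irr [tr [tot hseg]]]].
destruct hL as [f0 _].
pose ef := fun y => proj1_sig (ClassicalEpsilon.constructive_indefinite_description _ (hseg y)).
have efi : forall y s1 s2, ef y s1 = ef y s2 -> s1 = s2.
  move=> y; exact: (proj2_sig (ClassicalEpsilon.constructive_indefinite_description _ (hseg y))).
pose c := fun x y => match ClassicalEpsilon.excluded_middle_informative (lt x y) with
  | left h => ef y (exist _ x h)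
  | right _ => match ClassicalEpsilon.excluded_middle_informative (lt y x) with
     | left h => ef x (exist _ y h) | right _ => f0 0 end end.
have asym : forall x y, lt x y -> lt y x -> False.
  move=> x y h1 h2; exact: (irr _ (tr _ _ _ h1 h2)).
have c_lt : forall x y (h : lt x y), c x y = ef y (exist _ x h).
  move=> x y h; rewrite /c; case: (ClassicalEpsilon.excluded_middle_informative (lt x y)) => [h'|n].
  - by rewrite (proof_irrelevance _ h h').
  - by case: (n h).
have c_gt : forall x y (h : lt y x), c x y = ef x (exist _ y h).
  move=> x y h; rewrite /c; case: (ClassicalEpsilon.excluded_middle_informative (lt x y)) => [h'|n].
  - by case: (asym _ _ h h').
  case: (ClassicalEpsilon.excluded_middle_informative (lt y x)) => [h'|n'].
  - by rewrite (proof_irrelevance _ h h').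
  - by case: (n' h).
have csym : forall x y, c x y = c y x.
  move=> x y; case: (Classical_Prop.classic (x = y)) => [->//|nxy].
  case: (tot x y nxy) => h; first by rewrite (c_lt _ _ h) (c_gt _ _ h).
  by rewrite (c_gt _ _ h) (c_lt _ _ h).
have cuniq : forall y1 y2 z, lt y1 z -> lt y2 z -> c y1 z = c y2 z -> y1 = y2.
  move=> y1 y2 z h1 h2; rewrite (c_lt _ _ h1) (c_lt _ _ h2) => /efi E.
  exact: (f_equal (@proj1_sig _ _) E).
exists c; split => // xi X [f [finj fsurj]].
have [a [b [d [ab [ad bd]]]]] := hM3.
have [sa Ea] := fsurj a; have [sb Eb] := fsurj b; have [sd Ed] := fsurj d.
have dist : forall s1 s2 : subT X, f s1 <> f s2 -> proj1_sig s1 <> proj1_sig s2.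
  move=> [x1 h1] [x2 h2] /= n E; subst x2; apply: n.
  by rewrite (proof_irrelevance _ h1 h2).
apply: (graph_part K L lt c irr tr tot csym cuniq xi X (proj1_sig sa) (proj1_sig sb) (proj1_sig sd)).
- exact: proj2_sig sa.
- exact: proj2_sig sb.
- exact: proj2_sig sd.
- by apply: dist; rewrite Ea Eb.
- by apply: dist; rewrite Ea Ed.
- by apply: dist; rewrite Eb Ed.
Qed.
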